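(* Let $0\le\lambda<1$ and $N=1$. Then for $0\le\delta\le1$, $$\zeta(1,\delta,\lambda)=\max\Big\{0,\frac{\lambda(\delta-\lambda)}{1-\lambda},\frac{\delta(2-\lambda)-1}{1-\lambda}\Big\}=\begin{cases}0,&0\le\delta\le\lambda,\\ \frac{\lambda(\delta-\lambda)}{1-\lambda},&\lambda\le\delta\le\frac{1+\lambda}{2},\\ \frac{\delta(2-\lambda)-1}{1-\lambda},&\frac{1+\lambda}{2}\le\delta\le1.\end{cases}$$
   Context: Let $\mathcal H$ be a Hilbert space of finite dimension $D\ge 2$ and $|\Psi\rangle\in\mathcal H$ a unit vector. For $0\le\lambda<1$ let $\Omega_\lambda=|\Psi\rangle\langle\Psi|+\lambda(1-|\Psi\rangle\langle\Psi|)$. For an integer $N\ge1$ and a density operator $\rho$ on $\mathcal H^{\otimes(N+1)}$ put $p_\rho=\mathrm{tr}[(\Omega_\lambda^{\otimes N}\otimes 1)\rho]$ and $f_\rho=\mathrm{tr}[(\Omega_\lambda^{\otimes N}\otimes|\Psi\rangle\langle\Psi|)\rho]$, and $\zeta(N,\delta,\lambda)=\min\{f_\rho:p_\rho\ge\delta\}$, the minimum over permutation-invariant density operators on $\mathcal H^{\otimes(N+1)}$. *)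

(* Defs.v *)
From mathcomp Require Import all_boot all_order all_algebra.
From mathcomp Require Import reals complex mxtens.
Set Implicit Arguments. Unset Strict Implicit. Unset Printing Implicit Defensive.
Import Order.TTheory GRing.Theory Num.Theory.
Local Open Scope ring_scope.
Local Open Scope complex_scope.

Section QDefs.
Variable R : realType.
Local Notation C := R[i].

Definition adjmx {m n} (A : 'M[C]_(m, n)) : 'M[C]_(n, m) := (map_mx Num.conj A)^T.

Definition unit_vec {D} (psi : 'cV[C]_D) : Prop := adjmx psi *m psi = 1%:M.

Definition proj {D} (psi : 'cV[C]_D) : 'M[C]_D := psi *m adjmx psi.

Definition Omega {D} (lam : R) (psi : 'cV[C]_D) : 'M[C]_D :=
  proj psi + (lam%:C) *: (1%:M - proj psi).

Definition psd {n} (A : 'M[C]_n) : Prop :=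
  adjmx A = A /\ forall v : 'cV[C]_n, 0 <= (adjmx v *m A *m v) 0 0.

Definition density {n} (rho : 'M[C]_n) : Prop := psd rho /\ \tr rho = 1.

Definition swap_op D : 'M[C]_(D * D) :=
  \matrix_(k, l) ((((mxtens_unindex k).1 == (mxtens_unindex l).2) &&
                   ((mxtens_unindex k).2 == (mxtens_unindex l).1))%:R).

(* permutation invariance on H^{(x)2}: invariance under the only nontrivial
   permutation of S_2, the swap of the two tensor factors *)
Definition perm_invariant2 D (rho : 'M[C]_(D * D)) : Prop :=
  swap_op D *m rho *m swap_op D = rho.

Definition p_rho {D} (lam : R) (psi : 'cV[C]_D) (rho : 'M[C]_(D * D)) : C :=
  \tr ((Omega lam psi *t (1%:M : 'M[C]_D)) *m rho).
Definition f_rho {D} (lam : R) (psi : 'cV[C]_D) (rho : 'M[C]_(D * D)) : C :=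
  \tr ((Omega lam psi *t proj psi) *m rho).

Definition feasible1 {D} (lam delta : R) (psi : 'cV[C]_D) (rho : 'M[C]_(D * D)) : Prop :=
  density rho /\ perm_invariant2 rho /\ delta%:C <= p_rho lam psi rho.

Definition zeta1_is {D} (lam delta : R) (psi : 'cV[C]_D) (z : R) : Prop :=
  (exists rho, feasible1 lam delta psi rho /\ f_rho lam psi rho = z%:C) /\
  (forall rho, feasible1 lam delta psi rho -> z%:C <= f_rho lam psi rho).

End QDefs.

(* Main.v *)
Require Import Defs.
From mathcomp Require Import all_boot all_order all_algebra.
From mathcomp Require Import reals complex mxtens ring lra.
Import Order.TTheory GRing.Theory Num.Theory.
Local Open Scope ring_scope.
Local Open Scope complex_scope.

Lemma adjmxM (R : realType) m n p (A : 'M[R[i]]_(m, n)) (B : 'M[R[i]]_(n, p)) :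
  adjmx (A *m B) = adjmx B *m adjmx A.
Proof. by rewrite /adjmx map_mxM trmx_mul. Qed.

Lemma adjmxD (R : realType) m n (A B : 'M[R[i]]_(m, n)) :
  adjmx (A + B) = adjmx A + adjmx B.
Proof. by apply/matrixP=> i j; rewrite !mxE rmorphD. Qed.

Lemma adjmxN (R : realType) m n (A : 'M[R[i]]_(m, n)) :
  adjmx (- A) = - adjmx A.
Proof. by apply/matrixP=> i j; rewrite !mxE rmorphN. Qed.

Lemma adjmxZ (R : realType) m n (c : R[i]) (A : 'M[R[i]]_(m, n)) :
  adjmx (c *: A) = Num.conj c *: adjmx A.
Proof. by apply/matrixP=> i j; rewrite !mxE rmorphM. Qed.

Lemma adjmx1 (R : realType) n : adjmx (1%:M : 'M[R[i]]_n) = 1%:M.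
Proof. by apply/matrixP=> i j; rewrite !mxE eq_sym conjC_nat. Qed.

Lemma adjmxK (R : realType) m n (A : 'M[R[i]]_(m, n)) : adjmx (adjmx A) = A.
Proof. by apply/matrixP=> i j; rewrite !mxE conjCK. Qed.

Lemma adjmx_tens (R : realType) m n p q (A : 'M[R[i]]_(m, n)) (B : 'M[R[i]]_(p, q)) :
  adjmx (A *t B) = adjmx A *t adjmx B.
Proof. by apply/matrixP=> i j; rewrite !mxE rmorphM. Qed.

Lemma tensmxDl (R : comPzRingType) m n p q (A A' : 'M[R]_(m, n)) (B : 'M[R]_(p, q)) :
  (A + A') *t B = A *t B + A' *t B.
Proof. by apply/matrixP=> i j; rewrite !mxE mulrDl. Qed.

Lemma tensmxDr (R : comPzRingType) m n p q (A : 'M[R]_(m, n)) (B B' : 'M[R]_(p, q)) :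
  A *t (B + B') = A *t B + A *t B'.
Proof. by apply/matrixP=> i j; rewrite !mxE mulrDr. Qed.

Lemma tensmxZl (R : comPzRingType) m n p q c (A : 'M[R]_(m, n)) (B : 'M[R]_(p, q)) :
  (c *: A) *t B = c *: (A *t B).
Proof. by apply/matrixP=> i j; rewrite !mxE mulrA. Qed.

Lemma tensmxZr (R : comPzRingType) m n p q c (A : 'M[R]_(m, n)) (B : 'M[R]_(p, q)) :
  A *t (c *: B) = c *: (A *t B).
Proof. by apply/matrixP=> i j; rewrite !mxE mulrCA. Qed.

Lemma tensmx11 (R : comPzRingType) m n :
  (1%:M : 'M[R]_m) *t (1%:M : 'M[R]_n) = 1%:M.
Proof.
apply/matrixP=> i j; rewrite !mxE -natrM mulnb -xpair_eqE.
by rewrite -surjective_pairing -surjective_pairing (inj_eq (can_inj (@mxtens_unindexK m n))).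
Qed.

Lemma mxtrace_tens (R : comPzRingType) m n (A : 'M[R]_m) (B : 'M[R]_n) :
  \tr (A *t B) = \tr A * \tr B.
Proof. by rewrite /mxtrace mulr_sum; apply: eq_bigr => k _; rewrite mxE. Qed.

Lemma adj_ge0 (R : realType) n (w : 'cV[R[i]]_n) : 0 <= (adjmx w *m w) 0 0.
Proof.
rewrite mxE; apply: sumr_ge0 => i _; rewrite !mxE mulrC; exact: mul_conjC_ge0.
Qed.

Lemma psd_YY (R : realType) n m (Y : 'M[R[i]]_(n, m)) : psd (Y *m adjmx Y).
Proof.
split; first by rewrite adjmxM adjmxK.
move=> v; rewrite -!mulmxA mulmxA.
have -> : adjmx v *m Y = adjmx (adjmx Y *m v) by rewrite adjmxM adjmxK.
exact: adj_ge0.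
Qed.

Lemma psd_trace (R : realType) n m (rho : 'M[R[i]]_n) (Y : 'M[R[i]]_(n, m)) :
  psd rho -> 0 <= \tr (Y *m adjmx Y *m rho).
Proof.
move=> [_ Hp]; rewrite -mulmxA mxtrace_mulC /mxtrace; apply: sumr_ge0 => k _.
have -> : (adjmx Y *m rho *m Y) k k = (adjmx (col k Y) *m rho *m col k Y) 0 0.
  rewrite !mxE; apply: eq_bigr => j _; rewrite !mxE; congr (_ * _).
  by apply: eq_bigr => l _; rewrite !mxE.
exact: Hp.
Qed.
Definition sigm D (k : 'I_(D * D)) : 'I_(D * D) :=
  mxtens_index ((mxtens_unindex k).2, (mxtens_unindex k).1).

Arguments sigm {D}.

Lemma swap_opE (R : realType) D k i :
  swap_op R D k i = (i == sigm k)%:R.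
Proof.
rewrite mxE -(inj_eq (can_inj (@mxtens_unindexK D D))) /sigm mxtens_indexK.
rewrite [mxtens_unindex i]surjective_pairing xpair_eqE.
by rewrite [X in _ && X]eq_sym [X in X && _]eq_sym andbC.
Qed.

Lemma sigmK D : involutive (@sigm D).
Proof. move=> k; rewrite /sigm mxtens_indexK; exact: mxtens_unindexK. Qed.

Lemma swap_opE' (R : realType) D k i :
  swap_op R D i k = (i == sigm k)%:R.
Proof.
rewrite swap_opE; congr (_%:R).
by case: eqP => [->|H]; rewrite ?sigmK ?eqxx //; case: eqP => // E; case: H; rewrite E sigmK.
Qed.

Lemma sum_delta (R : pzSemiRingType) n (j : 'I_n) (F : 'I_n -> R) :
  \sum_i (i == j)%:R * F i = F j.
Proof.
rewrite (bigD1 j) //= eqxx mul1r big1 ?addr0 // => i /negbTE ->.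
by rewrite mul0r.
Qed.

Lemma swap_tens (R : realType) D (A B : 'M[R[i]]_D) :
  swap_op R D *m (A *t B) *m swap_op R D = B *t A.
Proof.
apply/matrixP=> k l; rewrite mxE.
under eq_bigr => j _ do rewrite swap_opE' mulrC mxE.
rewrite sum_delta.
under eq_bigr => j _ do rewrite swap_opE.
rewrite sum_delta !mxE /sigm !mxtens_indexK /= mulrC.
by [].
Qed.
Lemma real_cases (R : realType) (lam delta : R) :
  0 <= lam -> lam < 1 -> 0 <= delta -> delta <= 1 ->
  let z := Num.max 0 (Num.max (lam * (delta - lam) / (1 - lam))
                              ((delta * (2 - lam) - 1) / (1 - lam))) in
  (delta <= lam -> z = 0) /\
  (lam <= delta -> delta <= (1 + lam) / 2 -> z = lam * (delta - lam) / (1 - lam)) /\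
  ((1 + lam) / 2 <= delta -> z = (delta * (2 - lam) - 1) / (1 - lam)).
Proof.
move=> l0 l1 d0 d1 z.
have h1 : 0 < 1 - lam by lra.
have hi : 0 <= (1 - lam)^-1 by rewrite invr_ge0; lra.
split; [|split].
- move=> hd; apply/max_idPl; rewrite ge_max !ler_pdivrMr // !mul0r.
  apply/andP; split; nra.
- move=> hd1 hd2; rewrite /z.
  have hB : (delta * (2 - lam) - 1) / (1 - lam) <= lam * (delta - lam) / (1 - lam).
    apply: ler_wpM2r => //; nra.
  rewrite (max_idPl hB); apply/max_idPr; apply: divr_ge0; nra.
- move=> hd; rewrite /z.
  have hB : lam * (delta - lam) / (1 - lam) <= (delta * (2 - lam) - 1) / (1 - lam).
    apply: ler_wpM2r => //; nra.
  rewrite (max_idPr hB); apply/max_idPr; apply: divr_ge0; nra.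
Qed.

Lemma real_lb (R : realType) (lam delta a b c : R) :
  0 <= lam -> lam < 1 -> 0 <= a -> 0 <= b -> 0 <= c -> a + 2 * b + c = 1 ->
  delta <= a + b + lam * b + lam * c ->
  Num.max 0 (Num.max (lam * (delta - lam) / (1 - lam))
                     ((delta * (2 - lam) - 1) / (1 - lam))) <= a + lam * b.
Proof.
move=> l0 l1 a0 b0 c0 e hd.
have h1 : 0 < 1 - lam by lra.
rewrite !ge_max !ler_pdivrMr //.
have e1 : 0 <= a * (1 - lam) * (1 - lam) by rewrite mulr_ge0 ?mulr_ge0 //; lra.
have e2 : 0 <= c * (1 - lam) * (1 - lam) by rewrite mulr_ge0 ?mulr_ge0 //; lra.
have e3 : 0 <= b * lam by rewrite mulr_ge0.
apply/and3P; split; nra.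
Qed.

Lemma real_exist (R : realType) (lam delta : R) :
  0 <= lam -> lam < 1 -> 0 <= delta -> delta <= 1 ->
  exists x y w : R, [/\ 0 <= x, 0 <= y, 0 <= w & x + 2 * y + w = 1] /\
    delta <= x + y + lam * y + lam * w /\
    x + lam * y = Num.max 0 (Num.max (lam * (delta - lam) / (1 - lam))
                              ((delta * (2 - lam) - 1) / (1 - lam))).
Proof.
move=> l0 l1 d0 d1.
have [c1 [c2 c3]] := @real_cases R lam delta l0 l1 d0 d1.
have h1 : 0 < 1 - lam by lra.
have hn : 1 - lam != 0 by rewrite gt_eqF.
set t := (delta - lam) / (1 - lam).
have ht : t * (1 - lam) = delta - lam by rewrite /t divfK.
have [hdl|hdl] := lerP delta lam.
  exists 0, 0, 1; (split; [split|split]) => //; try lra.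
case: (lerP delta ((1 + lam) / 2)) => hd2.
  have t0 : 0 <= t by rewrite /t divr_ge0; lra.
  have t1 : t <= 1/2 by rewrite /t ler_pdivrMr //; lra.
  exists 0, t, (1 - 2 * t); (split; [split|split]) => //; try lra.
  by rewrite c2 ?mulrA; lra.
have t1 : 1/2 <= t by rewrite /t ler_pdivlMr //; lra.
have t2 : t <= 1 by rewrite /t ler_pdivrMr //; lra.
exists (2 * t - 1), (1 - t), 0; (split; [split|split]) => //; try lra.
rewrite c3; last lra.
apply: (mulIf hn); rewrite divfK //; nra.
Qed.

Lemma proj_facts (R : realType) D (psi : 'cV[R[i]]_D) :
  unit_vec psi ->
  let P := proj psi in let Q := 1%:M - P in
  [/\ adjmx P = P, adjmx Q = Q, P *m P = P, Q *m Q = Q & P *m Q = 0] /\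
  [/\ Q *m P = 0, \tr P = 1, \tr Q = D%:R - 1 & P + Q = 1%:M].
Proof.
move=> Hu P Q; rewrite /unit_vec in Hu.
have PP : P *m P = P by rewrite /P /proj mulmxA -(mulmxA psi) Hu mulmx1.
have hP : adjmx P = P by rewrite /P /proj adjmxM adjmxK.
have PQ : P *m Q = 0 by rewrite /Q mulmxBr mulmx1 PP subrr.
have QP : Q *m P = 0 by rewrite /Q mulmxBl mul1mx PP subrr.
have tP : \tr P = 1 by rewrite /P /proj mxtrace_mulC Hu mxtrace1.
split; [split|split] => //.
- by rewrite /Q adjmxD adjmxN adjmx1 hP.
- by rewrite /Q mulmxBl mul1mx -/Q PQ subr0.
- by rewrite /Q linearB /= mxtrace1 tP.
- by rewrite /Q addrC subrK.
Qed.

Lemma t_expand (R : realType) D (P Q : 'M[R[i]]_D) (l : R[i]) (rho : 'M[R[i]]_(D * D)) :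
  P + Q = 1%:M ->
  [/\ \tr (((P + l *: Q) *t 1%:M) *m rho) =
        \tr ((P *t P) *m rho) + \tr ((P *t Q) *m rho) + l * \tr ((Q *t P) *m rho)
        + l * \tr ((Q *t Q) *m rho),
      \tr (((P + l *: Q) *t P) *m rho) = \tr ((P *t P) *m rho) + l * \tr ((Q *t P) *m rho) &
      \tr rho = \tr ((P *t P) *m rho) + \tr ((P *t Q) *m rho) + \tr ((Q *t P) *m rho)
        + \tr ((Q *t Q) *m rho)].
Proof.
move=> PQ1; split.
- rewrite -PQ1 !tensmxDl !tensmxDr !tensmxZl !mulmxDl -!scalemxAl !mxtraceD !mxtraceZ.
  by rewrite !addrA.
- by rewrite !tensmxDl !tensmxZl !mulmxDl -!scalemxAl !mxtraceD !mxtraceZ.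
- rewrite -{1}[rho]mul1mx -tensmx11 -PQ1 !tensmxDl !tensmxDr !mulmxDl !mxtraceD.
  by rewrite !addrA.
Qed.

Lemma tr_nonneg (R : realType) D (X Z : 'M[R[i]]_D) (rho : 'M[R[i]]_(D * D)) :
  adjmx X = X -> adjmx Z = Z -> X *m X = X -> Z *m Z = Z -> psd rho ->
  0 <= \tr ((X *t Z) *m rho).
Proof.
move=> hX hZ XX ZZ hr.
have -> : X *t Z = (X *t Z) *m adjmx (X *t Z).
  by rewrite adjmx_tens hX hZ tensmx_mul XX ZZ.
exact: psd_trace.
Qed.

Lemma tr_swap (R : realType) D (X Z : 'M[R[i]]_D) (rho : 'M[R[i]]_(D * D)) :
  perm_invariant2 rho -> \tr ((Z *t X) *m rho) = \tr ((X *t Z) *m rho).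
Proof.
rewrite /perm_invariant2 => Hs.
rewrite -swap_tens -{2}Hs -!mulmxA mxtrace_mulC -!mulmxA.
by [].
Qed.
Lemma nonneg_real (R : realType) (x : R[i]) : 0 <= x -> x = (complex.Re x)%:C.
Proof. by move/ger0_Im; case: x => a b /= ->. Qed.

Lemma psdD (R : realType) n (A B : 'M[R[i]]_n) : psd A -> psd B -> psd (A + B).
Proof.
move=> [hA pA] [hB pB]; split; first by rewrite adjmxD hA hB.
move=> v; rewrite mulmxDr mulmxDl mxE; exact: addr_ge0.
Qed.

Lemma psdZ (R : realType) n (c : R[i]) (A : 'M[R[i]]_n) : 0 <= c -> psd A -> psd (c *: A).
Proof.
move=> c0 [hA pA]; split; first by rewrite adjmxZ hA geC0_conj.
move=> v; rewrite -scalemxAr -scalemxAl mxE; exact: mulr_ge0.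
Qed.

Lemma psd_tens (R : realType) D (X Z : 'M[R[i]]_D) :
  adjmx X = X -> adjmx Z = Z -> X *m X = X -> Z *m Z = Z -> psd (X *t Z).
Proof.
move=> hX hZ XX ZZ.
have -> : X *t Z = (X *t Z) *m adjmx (X *t Z).
  by rewrite adjmx_tens hX hZ tensmx_mul XX ZZ.
exact: psd_YY.
Qed.

Lemma coeffs (R : realType) D (P Q : 'M[R[i]]_D) (al be ga d : R[i]) :
  P *m P = P -> Q *m Q = Q -> P *m Q = 0 -> Q *m P = 0 -> \tr P = 1 -> \tr Q = d ->
  let rho := al *: (P *t P) + be *: (P *t Q + Q *t P) + ga *: (Q *t Q) in
  [/\ \tr ((P *t P) *m rho) = al, \tr ((P *t Q) *m rho) = be * d,
      \tr ((Q *t P) *m rho) = be * d & \tr ((Q *t Q) *m rho) = ga * (d * d)].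
Proof.
move=> PP QQ PQ QP tP tQ rho.
rewrite /rho !mulmxDr -!scalemxAr !mulmxDr !tensmx_mul PP QQ PQ QP.
rewrite !tensmx0 !tens0mx ?scaler0 ?addr0 ?add0r !mxtraceD !mxtraceZ !mxtrace_tens tP tQ.
split; rewrite ?mxtrace0; ring.
Qed.

Lemma swap_rho (R : realType) D (P Q : 'M[R[i]]_D) (al be ga : R[i]) :
  perm_invariant2 (al *: (P *t P) + be *: (P *t Q + Q *t P) + ga *: (Q *t Q)).
Proof.
rewrite /perm_invariant2 !mulmxDr !mulmxDl -!scalemxAr -!scalemxAl !mulmxDr !mulmxDl.
by rewrite !swap_tens [Q *t P + _]addrC.
Qed.
Lemma lb_C (R : realType) (lam delta : R) (A B C : R[i]) :
  0 <= lam -> lam < 1 -> 0 <= A -> 0 <= B -> 0 <= C -> A + B + B + C = 1 ->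
  delta%:C <= A + B + lam%:C * B + lam%:C * C ->
  (Num.max 0 (Num.max (lam * (delta - lam) / (1 - lam))
                     ((delta * (2 - lam) - 1) / (1 - lam))))%:C <= A + lam%:C * B.
Proof.
move=> l0 l1 ha hb hc.
have ha' : 0 <= complex.Re A by rewrite -ler0c -nonneg_real.
have hb' : 0 <= complex.Re B by rewrite -ler0c -nonneg_real.
have hc' : 0 <= complex.Re C by rewrite -ler0c -nonneg_real.
rewrite (@nonneg_real R A ha) (@nonneg_real R B hb) (@nonneg_real R C hc).
move: (complex.Re A) (complex.Re B) (complex.Re C) ha' hb' hc' => a b c ha' hb' hc' htr hp.
have E1 : (a + b + lam * b + lam * c)%:C = a%:C + b%:C + lam%:C * b%:C + lam%:C * c%:C.
  by rewrite !rmorphD !rmorphM.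
have E2 : (a + lam * b)%:C = a%:C + lam%:C * b%:C by rewrite !rmorphD !rmorphM.
have E3 : (a + b + b + c)%:C = a%:C + b%:C + b%:C + c%:C by rewrite !rmorphD.
rewrite -E1 lecR in hp.
rewrite -E3 -(rmorph1 (real_complex R)) in htr.
have {}htr := complexI htr.
rewrite -E2 lecR; apply: (@real_lb R lam delta a b c) => //; lra.
Qed.

Lemma exist_C (R : realType) D (P Q : 'M[R[i]]_D) (lam delta : R) :
  (2 <= D)%N -> adjmx P = P -> adjmx Q = Q -> P *m P = P -> Q *m Q = Q ->
  P *m Q = 0 -> Q *m P = 0 -> \tr P = 1 -> \tr Q = D%:R - 1 -> P + Q = 1%:M ->
  0 <= lam -> lam < 1 -> 0 <= delta -> delta <= 1 ->
  exists rho : 'M[R[i]]_(D * D),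
    (density rho /\ perm_invariant2 rho /\
     delta%:C <= \tr (((P + lam%:C *: Q) *t 1%:M) *m rho)) /\
    \tr (((P + lam%:C *: Q) *t P) *m rho) =
    (Num.max 0 (Num.max (lam * (delta - lam) / (1 - lam))
                     ((delta * (2 - lam) - 1) / (1 - lam))))%:C.
Proof.
move=> HD hP hQ PP QQ PQ QP tP tQ PQ1 l0 l1 d0 d1.
have [x [y [w [[x0 y0 w0 e] [hp hf]]]]] := @real_exist R lam delta l0 l1 d0 d1.
set d : R := D%:R - 1.
have d0' : 0 < d.
  have : (2%:R <= D%:R :> R) by rewrite ler_nat.
  rewrite /d; lra.
have dn : d != 0 by rewrite gt_eqF.
have tQ' : \tr Q = d%:C by rewrite tQ /d rmorphB rmorph1 rmorph_nat.
set rho := x%:C *: (P *t P) + (y / d)%:C *: (P *t Q + Q *t P) + (w / (d * d))%:C *: (Q *t Q).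
exists rho.
have [ca cb cb' cc] := @coeffs R D P Q x%:C (y / d)%:C (w / (d * d))%:C d%:C PP QQ PQ QP tP tQ'.
have [ep ef et] := @t_expand R D P Q lam%:C rho PQ1.
have Ey : (y / d)%:C * d%:C = y%:C by rewrite -rmorphM divfK.
have Ew : (w / (d * d))%:C * (d%:C * d%:C) = w%:C by rewrite -!rmorphM divfK // mulf_neq0.
rewrite ep ef ca cb cb' cc Ey Ew.
split; [split; [split|split]|].
- have pPP := @psd_tens R D P P hP hP PP PP.
  have pPQ := @psd_tens R D P Q hP hQ PP QQ.
  have pQP := @psd_tens R D Q P hQ hP QQ PP.
  have pQQ := @psd_tens R D Q Q hQ hQ QQ QQ.
  apply: psdD; [apply: psdD|].
  + by apply: psdZ => //; rewrite ler0c.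
  + by apply: psdZ; [rewrite ler0c divr_ge0 // ltW | exact: psdD].
  + by apply: psdZ => //; rewrite ler0c divr_ge0 // mulr_ge0 // ltW.
- have E : (x + y + y + w)%:C = x%:C + y%:C + y%:C + w%:C by rewrite !rmorphD.
  by rewrite et ca cb cb' cc Ey Ew -E -(rmorph1 (real_complex R)); congr (_%:C); lra.
- exact: swap_rho.
- have E : (x + y + lam * y + lam * w)%:C = x%:C + y%:C + lam%:C * y%:C + lam%:C * w%:C.
    by rewrite !rmorphD !rmorphM.
  by rewrite -E lecR.
- have E : (x + lam * y)%:C = x%:C + lam%:C * y%:C by rewrite !rmorphD !rmorphM.
  by rewrite -E hf.
Qed.
Theorem proposition2 (R : realType) (D : nat) (psi : 'cV[R[i]]_D) (lam delta : R) :
  (2 <= D)%N -> unit_vec psi ->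
  0 <= lam -> lam < 1 -> 0 <= delta -> delta <= 1 ->
  let z := Num.max 0 (Num.max (lam * (delta - lam) / (1 - lam))
                              ((delta * (2 - lam) - 1) / (1 - lam))) in
  zeta1_is lam delta psi z /\
  (delta <= lam -> z = 0) /\
  (lam <= delta -> delta <= (1 + lam) / 2 -> z = lam * (delta - lam) / (1 - lam)) /\
  ((1 + lam) / 2 <= delta -> z = (delta * (2 - lam) - 1) / (1 - lam)).
Proof.
move=> HD Hu l0 l1 d0 d1 z.
split; last exact: (@real_cases R lam delta l0 l1 d0 d1).
have [[hP hQ PP QQ PQ] [QP tP tQ PQ1]] := @proj_facts R D psi Hu.
split.
- have [rho [hfeas hf]] := @exist_C R D (proj psi) (1%:M - proj psi) lam delta HD
     hP hQ PP QQ PQ QP tP tQ PQ1 l0 l1 d0 d1.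
  by exists rho; split.
- move=> rho [[hpsd htr] [hsym hp]].
  have [ep ef et] := @t_expand R D (proj psi) (1%:M - proj psi) lam%:C rho PQ1.
  have ha := @tr_nonneg R D _ _ rho hP hP PP PP hpsd.
  have hb := @tr_nonneg R D _ _ rho hP hQ PP QQ hpsd.
  have hc := @tr_nonneg R D _ _ rho hQ hQ QQ QQ hpsd.
  have hs := @tr_swap R D (proj psi) (1%:M - proj psi) rho hsym.
  rewrite /f_rho /Omega ef.
  move: hp; rewrite /p_rho /Omega ep => hp.
  rewrite et in htr.
  rewrite hs in hp htr *.
  exact: (@lb_C R lam delta _ _ _ l0 l1 ha hb hc htr hp).
Qed.
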